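(* Let $N$ be a finite group, let $\chi\in\operatorname{Irr}(N)$ with $\operatorname Z(N)\subseteq\ker\chi$, and let $A$ be a subgroup of $\operatorname{Aut}(N)$ containing the group of inner automorphisms $\operatorname{Inn}(N)\cong N/\operatorname Z(N)$. Regard $\chi$ as a character of $\operatorname{Inn}(N)$ and assume it extends to its stabilizer $A_\chi$ in $A$. Then for every finite group $G$ with $N\trianglelefteq G$ such that the image of $G$ in $\operatorname{Aut}(N)$ (via conjugation) is contained in $A$, the character $\chi$ extends to its stabilizer $G_\chi$. *)

(* Defs.v *)
From HB Require Import structures.
From mathcomp Require Import all_boot all_order all_algebra all_fingroup all_solvable all_field all_character.
Set Implicit Arguments. Unset Strict Implicit. Unset Printing Implicit Defensive.
Import GRing.Theory Num.Theory.
Local Open Scope group_scope.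

Definition Inn (gT : finGroupType) (N : {group gT}) : {group {perm gT}} :=
  (conj_aut N @* N)%G.

Definition stab (gT : finGroupType) (G H : {group gT}) (phi : 'CF(H))
  : {group gT} := (G :&: inertia_group phi)%G.

Definition extends_to (gT : finGroupType) (N H : {group gT}) (phi : 'CF(N)) :=
  exists2 psi : 'CF(H), psi \is a character & ('Res[N] psi)%R = phi.

(* Main.v *)
Require Import Defs.
From HB Require Import structures.
From mathcomp Require Import all_boot all_order all_algebra all_fingroup all_solvable all_field all_character.
Import GRing.Theory Num.Theory.
Local Open Scope group_scope.

Theorem lemma2p4 (gT : finGroupType) (N : {group gT}) (chi : 'CF(N))
    (A : {group {perm gT}}) (theta : 'CF(Inn N)) :
  chi \in irr N ->
  'Z(N) \subset cfker chi ->
  A \subset Aut N ->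
  Inn N \subset A ->
  (* theta is chi regarded as a character of Inn(N) = N / Z(N) *)
  @cfMorph gT _ 'N(N) (conj_aut N) N theta = chi ->
  extends_to (stab A theta) theta ->
  forall G : {group gT},
    N <| G ->
    conj_aut N @* G \subset A ->
    extends_to (stab G chi) chi.
Proof.
move=> _ _ _ sInnA Ech [psi0 Cpsi0 Rpsi0] G /andP[sNG nNG] sGA.
set H := stab G chi.
have sHG : H \subset G by exact: subsetIl.
have sHD : H \subset 'N(N) by exact: subset_trans sHG nNG.
have sNH : N \subset H.
  by rewrite subsetI sNG; apply: sub_inertia.
set K := (conj_aut N @* H)%G.
have sKS : K \subset stab A theta.
  apply/subsetP=> _ /morphimP[y Dy Hy ->].
  move: Hy; rewrite inE => /andP[Gy Iy].
  rewrite inE; apply/andP; split.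
    by apply: (subsetP sGA); apply: mem_morphim.
  rewrite inE; apply/andP; split.
    by apply: (subsetP (morphim_norm _ _)); apply: mem_morphim.
  apply/eqP; apply: (cfMorph_inj (f := conj_aut N) (normG N)) => //.
  rewrite -cfConjgMorph ?Dy //.
  by rewrite Ech; apply: inertiaJ.
have sInnK : Inn N \subset K by apply: morphimS.
exists (cfMorph ('Res[K] psi0)%R).
  by apply: cfMorph_char; apply: cfRes_char.
rewrite (cfResMorph (f := conj_aut N) (G := H) (H := N)) //.
rewrite (cfResRes (G := stab A theta)) //.
rewrite -Ech.
exact: (congr1 (@cfMorph gT _ 'N(N) (conj_aut N) N) Rpsi0).
Qed.
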